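(* Let $k$ be an algebraically closed field of characteristic zero, let $\mathfrak g$ be a finite-dimensional nilpotent Lie algebra over $k$, and let $(A,\cdot)$ be an LR-structure on $\mathfrak g$. Let $\mathfrak a\subseteq\mathfrak{gl}(A)$ be the (abelian) Lie subalgebra spanned by all $L(x)$, $x\in A$, and let $A=A_1\oplus\cdots\oplus A_s$ be the decomposition of $A$ into the (nonzero) generalized weight spaces $A_i=A_{\alpha_i}(\mathfrak a)$ of the inclusion representation of $\mathfrak a$, with pairwise distinct weights $\alpha_i\in\mathrm{Hom}(\mathfrak a,k)$. For each $i$ let $e_{i,1},\dots,e_{i,n_i}$ be a basis of $A_i$ in which every $L(z)|_{A_i}$, $z\in A$, is upper triangular (with all diagonal entries equal to $\alpha_i(L(z))$), and put $A_{i,n_i-1}=\mathrm{span}(e_{i,1},\dots,e_{i,n_i-1})$. Write $x\in A$ as $x=x_1+\dots+x_s$ with $x_j\in A_j$. If $x_i\in A_{i,n_i-1}$ for some $i$, then $\alpha_i(L(x))=0$.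
   Context: An LR-algebra is a vector space $A$ with a bilinear product $\cdot$ satisfying $x\cdot(y\cdot z)=y\cdot(x\cdot z)$ and $(x\cdot y)\cdot z=(x\cdot z)\cdot y$ for all $x,y,z\in A$. An LR-structure on a Lie algebra $\mathfrak g$ is an LR-algebra product on the underlying vector space of $\mathfrak g$ such that $x\cdot y-y\cdot x=[x,y]$. $L(x)y=x\cdot y$, $R(x)y=y\cdot x$; the operators $L(x)$ pairwise commute in an LR-algebra. *)

(* Defs.v *)
From HB Require Import structures.
From mathcomp Require Import all_boot all_order all_algebra all_field.
Set Implicit Arguments. Unset Strict Implicit. Unset Printing Implicit Defensive.
Import GRing.Theory.
Local Open Scope ring_scope.

Definition bilinear_prod (k : fieldType) (vT : vectType k)
  (mul : vT -> vT -> vT) : Prop :=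
  (forall (a : k) x y z, mul (a *: x + y) z = a *: mul x z + mul y z) /\
  (forall (a : k) x y z, mul x (a *: y + z) = a *: mul x y + mul x z).

Definition LR_algebra (k : fieldType) (vT : vectType k)
  (mul : vT -> vT -> vT) : Prop :=
  bilinear_prod mul /\
  (forall x y z, mul x (mul y z) = mul y (mul x z)) /\
  (forall x y z, mul (mul x y) z = mul (mul x z) y).

Definition commutator_br (k : fieldType) (vT : vectType k)
  (mul : vT -> vT -> vT) (x y : vT) : vT := mul x y - mul y x.

(* Nilpotency of a Lie algebra: some term of the lower central series vanishes,
   i.e. all brackets [x1,[x2,...,[xm,y]...]] of a fixed length vanish
   (these brackets span the lower central series term g^{m+1}). *)
Definition lie_nilpotent (k : fieldType) (vT : vectType k)
  (br : vT -> vT -> vT) : Prop :=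
  exists m : nat, forall (xs : seq vT) (y : vT),
    size xs = m -> foldr (fun x acc => br x acc) y xs = 0.

(* Generalized weight space membership for the abelian algebra spanned by the
   L(x) = mul x, with weight given by lam : x |-> alpha(L(x)). *)
Definition in_gen_weight_space (k : fieldType) (vT : vectType k)
  (mul : vT -> vT -> vT) (lam : vT -> k) (v : vT) : Prop :=
  forall x : vT, exists n : nat, iter n (fun w => mul x w - lam x *: w) v = 0.

(* Main.v *)
Require Import Defs.
From HB Require Import structures.
From mathcomp Require Import all_boot all_order all_algebra all_field.
Import GRing.Theory.
Local Open Scope ring_scope.

Lemma lin0 {k : fieldType} {vT : vectType k} {f : vT -> vT} :
  (forall (a : k) u w, f (a *: u + w) = a *: f u + f w) -> f 0 = 0.
Proof.
move=> hf; have := hf 1 0 0; rewrite !scale1r addr0 => h.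
by apply: (@addrI _ (f 0)); rewrite addr0 -h.
Qed.

Lemma linD {k : fieldType} {vT : vectType k} {f : vT -> vT} :
  (forall (a : k) u w, f (a *: u + w) = a *: f u + f w) ->
  forall u w, f (u + w) = f u + f w.
Proof. by move=> hf u w; have := hf 1 u w; rewrite !scale1r. Qed.

Lemma lin_sum {k : fieldType} {vT : vectType k} (f : vT -> vT)
  (I : finType) (P : pred I) (g : I -> vT) :
  (forall (a : k) u w, f (a *: u + w) = a *: f u + f w) ->
  f (\sum_(j | P j) g j) = \sum_(j | P j) f (g j).
Proof.
move=> hf; elim/big_rec2: _ => [|j y1 y2 _ IH]; first exact: (lin0 hf).
by rewrite (linD hf) IH.
Qed.

Lemma span_lin {k : fieldType} {vT : vectType k} (f : vT -> vT)
  (X : seq vT) (U : {vspace vT}) :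
  (forall (a : k) u w, f (a *: u + w) = a *: f u + f w) ->
  (forall y, y \in X -> f y \in U) ->
  forall v, v \in <<X>>%VS -> f v \in U.
Proof.
move=> hf hX v hv.
have := @coord_span _ _ _ (in_tuple X) v hv => ->.
rewrite lin_sum //; apply: memv_suml => j _.
have -> : f (coord (in_tuple X) j v *: (in_tuple X)`_j) =
          coord (in_tuple X) j v *: f (in_tuple X)`_j.
  by have := hf (coord (in_tuple X) j v) (in_tuple X)`_j 0;
     rewrite addr0 (lin0 hf) addr0.
by apply: memvZ; apply: hX; apply: mem_nth; exact: ltn_ord.
Qed.

Lemma key_iter {k : fieldType} {vT : vectType k} (T : vT -> vT)
  (U : {vspace vT}) (v : vT) (c : k) (m : nat) :
  (forall (a : k) u w, T (a *: u + w) = a *: T u + T w) ->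
  (forall u, u \in U -> T u \in U) ->
  T v - c *: v \in U ->
  iter m T v - c ^+ m *: v \in U.
Proof.
move=> hT hU hv; elim: m => [|m IH]; first by rewrite /= expr0 scale1r subrr mem0v.
have -> : iter m.+1 T v = c ^+ m *: T v + T (iter m T v - c ^+ m *: v).
  by rewrite -hT addrC subrK.
idtac.
rewrite exprSr -scalerA addrAC -scalerBr.
by apply: memvD; [apply: memvZ | apply: hU].
Qed.

Lemma key {k : fieldType} {vT : vectType k} (T : vT -> vT)
  (U : {vspace vT}) (v : vT) (c : k) (m : nat) :
  (forall (a : k) u w, T (a *: u + w) = a *: T u + T w) ->
  (forall u, u \in U -> T u \in U) ->
  T v - c *: v \in U -> iter m T v = 0 -> v \notin U -> c = 0.
Proof.
move=> hT hU hv h0 hn; have := key_iter T U v c m hT hU hv; rewrite h0 sub0r memvN => h.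
have : c ^+ m == 0.
  apply: contraNT hn => hc.
  by rewrite -(scale1r v) -(mulVf hc) -scalerA memvZ.
by rewrite expf_eq0 => /andP[_ /eqP].
Qed.
Lemma linZ {k : fieldType} {vT : vectType k} {f : vT -> vT} :
  (forall (a : k) u w, f (a *: u + w) = a *: f u + f w) ->
  forall a u, f (a *: u) = a *: f u.
Proof. by move=> hf a u; have := hf a u 0; rewrite !addr0 (lin0 hf) addr0. Qed.

Lemma linB {k : fieldType} {vT : vectType k} {f : vT -> vT} :
  (forall (a : k) u w, f (a *: u + w) = a *: f u + f w) ->
  forall u w, f (u - w) = f u - f w.
Proof.
move=> hf u w; rewrite -scaleN1r (linD hf) (linZ hf) scaleN1r //.
Qed.

Theorem lemma2p2
  (k : closedFieldType) (hchar : [pchar k] =i pred0)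
  (vT : vectType k) (mul : vT -> vT -> vT)
  (hLR : LR_algebra mul)
  (hnil : lie_nilpotent (commutator_br mul))
  (s : nat)
  (lam : 'I_s -> vT -> k)
  (hlam_lin : forall i (a : k) x y, lam i (a *: x + y) = a * lam i x + lam i y)
  (hlam_L : forall i x y, (forall z, mul x z = mul y z) -> lam i x = lam i y)
  (hlam_dist : forall i j : 'I_s, (forall x, lam i x = lam j x) -> i = j)
  (A : 'I_s -> {vspace vT})
  (hA : forall i v, v \in A i <-> in_gen_weight_space mul (lam i) v)
  (hA0 : forall i, A i != 0%VS)
  (hdir : directv (\sum_(i < s) A i))
  (hfull : (\sum_(i < s) A i)%VS = fullv)
  (e : 'I_s -> seq vT)
  (he : forall i, basis_of (A i) (e i))
  (htri : forall i (z : vT) (j : nat), (j < size (e i))%N ->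
            mul z (nth 0 (e i) j) \in <<take j.+1 (e i)>>%VS)
  (x : vT) (xs : 'I_s -> vT)
  (hxs : forall j, xs j \in A j)
  (hx : x = \sum_(j < s) xs j)
  (i : 'I_s)
  (hxi : xs i \in <<take (size (e i)).-1 (e i)>>%VS) :
  lam i x = 0.
Proof.
move: hLR => [[hbl hbr] [hL hR]].
have Llin : forall z (a : k) u w, mul z (a *: u + w) = a *: mul z u + mul z w.
  by move=> z a u w; exact: hbr.
have Rlin : forall z (a : k) u w, mul (a *: u + w) z = a *: mul u z + mul w z.
  by move=> z a u w; exact: hbl.
set n := size (e i).
have hbas := he i.
have hspan : <<e i>>%VS = A i := span_basis hbas.
have n_gt0 : (0 < n)%N.
  rewrite lt0n; apply: contra (hA0 i) => /eqP/size0nil h0.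
  by rewrite -hspan h0 span_nil.
have hlt : (n.-1 < n)%N by rewrite prednK.
set en := nth 0 (e i) n.-1.
have he_split : e i = take n.-1 (e i) ++ [:: en].
  by rewrite /en /n cats1 -take_nth // prednK // take_size.
set V := <<take n.-1 (e i)>>%VS.
set W := (\sum_(j | j != i) A j)%VS.
set U := (V + W)%VS.
have en_Ai : en \in A i by rewrite -hspan memv_span // mem_nth.
have V_Ai : (V <= A i)%VS by rewrite -hspan; apply: sub_span => y /mem_take.
have en_notV : en \notin V.
  have hp : perm_eq (take n.-1 (e i) ++ [:: en]) (en :: take n.-1 (e i)).
    by rewrite perm_catC.
  have := basis_free hbas; rewrite he_split.
  by rewrite (perm_free hp) free_cons => /andP[].
have en_notU : en \notin U.
  apply/negP => /memv_addP[a aV [b bW hab]].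
  have bAi : b \in A i.
    have -> : b = en - a by rewrite hab addrC addKr.
    by apply: memvB => //; apply: (subvP V_Ai).
  move/directv_sumP: hdir => /(_ i isT) hcap.
  have : b \in (A i :&: \sum_(j | true && (j != i)) A j)%VS.
    by rewrite memv_cap bAi; exact: bW.
  rewrite hcap memv0 => /eqP b0.
  by move: en_notV; rewrite hab b0 addr0 aV.
have LA : forall z j u, u \in A j -> mul z u \in A j.
  move=> z j u /hA hu; apply/hA; rewrite /in_gen_weight_space in hu * => y.
  have [p hp] := hu y; exists p.
  have comm : forall w, mul z (mul y w - lam j y *: w) =
                        mul y (mul z w) - lam j y *: mul z w.
    by move=> w; rewrite (linB (Llin z)) (linZ (Llin z)) hL.
  have -> : iter p (fun w => mul y w - lam j y *: w) (mul z u) =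
            mul z (iter p (fun w => mul y w - lam j y *: w) u).
    by elim: p {hp} => //= p ->; rewrite comm.
  by rewrite hp (lin0 (Llin z)).
have LV : forall z u, u \in V -> mul z u \in V.
  move=> z; apply: (span_lin (mul z) (take n.-1 (e i)) V (Llin z)).
  move=> y /(nthP 0) [j hj <-].
  have hj' : (j < n.-1)%N by move: hj; rewrite size_takel // leq_pred.
  rewrite nth_take //.
  have := htri i z j (leq_trans hj' (leq_pred n)).
  apply: subvP; apply: sub_span => y' hy'.
  by move: hy'; rewrite -(take_takel (e i) hj') => /mem_take.
have LW : forall z u, u \in W -> mul z u \in W.
  move=> z u /memv_sumP [us hus ->]; rewrite (lin_sum (mul z) _ _ _ (Llin z)).
  by apply: memv_sumr => j hj; apply: LA; apply: hus.
have LU : forall z u, u \in U -> mul z u \in U.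
  move=> z u /memv_addP [a aV [b bW ->]]; rewrite (linD (Llin z)).
  by apply: memv_add; [exact: LV | exact: LW].
have RU : forall w, mul w x \in U.
  move=> w; rewrite hx (lin_sum (mul w) _ _ _ (Llin w)) (bigD1 i) //=.
  apply: memv_add; first exact: LV.
  by apply: memv_sumr => j hj; apply: LA.
have hspan' : <<e i>>%VS = (V + <[en]>)%VS.
  by rewrite {1}he_split span_cat span_seq1.
have [c [a aV hLen]] : exists c, exists2 a, a \in V & mul x en = c *: en + a.
  have := htri i x n.-1 hlt; rewrite prednK // take_size hspan'.
  move=> /memv_addP [a aV [b /vlineP [c ->] ->]].
  by exists c; exists a => //; rewrite addrC.
have aU : a \in U by rewrite -[a]addr0; apply: memv_add => //; apply: mem0v.
have c_eq : c - lam i x = 0.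
  have [p hp] := (proj1 (hA i en) en_Ai) x.
  apply: (key (fun w => mul x w - lam i x *: w) U en (c - lam i x) p) => //.
  - move=> b u w /=; rewrite Llin scalerDr opprD addrACA scalerBr !scalerA.
    by rewrite (mulrC b).
  - by move=> u hu /=; apply: memvB; [exact: LU | exact: memvZ].
  - rewrite /= hLen.
    have -> : c *: en + a - lam i x *: en - (c - lam i x) *: en = a.
      by rewrite scalerBl opprB addrA subrK addrC addKr.
    exact: aU.
have c0 : c = 0.
  have [m hm] := hnil.
  have hit : iter m (commutator_br mul x) en = 0.
    have := hm (nseq m x) en (size_nseq _ _).
    suff -> : foldr (fun x0 acc => commutator_br mul x0 acc) en (nseq m x) =
              iter m (commutator_br mul x) en by [].
    by elim: m {hm} => //= m ->.
  apply: (key (commutator_br mul x) U en c m) => //.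
  - move=> b u w; rewrite /commutator_br Llin Rlin scalerBr opprD addrACA.
    by [].
  - by move=> u hu; rewrite /commutator_br; apply: memvB; [exact: LU | exact: RU].
  - rewrite /commutator_br hLen.
    have -> : c *: en + a - mul en x - c *: en = a - mul en x.
      by rewrite addrAC [c *: en + a]addrC addrK.
    by apply: memvB.
by move: c_eq; rewrite c0 sub0r => /eqP; rewrite oppr_eq0 => /eqP.
Qed.
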